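(* Let $A\in GL(n,\mathbb Z)$ with columns $\mathbf a_1,\dots,\mathbf a_n$ and $\lambda\in\mathbb R^n$. Let $\phi^*$ be the automorphism of $\overline{\mathbb R}[x_1^{\pm1},\dots,x_n^{\pm1}]$ with $\phi^*(x_i)=\lambda_i\odot\mathbf x^{\mathbf a_i}$, let $\phi^*_A$ be the automorphism (of $\overline{\mathbb R}$- or $\mathbb B$-Laurent polynomials) with $\phi_A^*(x_i)=\mathbf x^{\mathbf a_i}$, and let $\operatorname{trop}(\phi):\mathbb R^n\to\mathbb R^n$ be $\mathbf w\mapsto A^T\mathbf w+\lambda$. If $I\subseteq\overline{\mathbb R}[x_1^{\pm1},\dots,x_n^{\pm1}]$ is a tropical ideal and $I'=(\phi^* )^{-1}(I)$, then $I'$ is a tropical ideal, $\phi^*_A(\operatorname{in}_{\operatorname{trop}(\phi)(\mathbf w)}(I'))=\operatorname{in}_{\mathbf w}(I)$ for all $\mathbf w\in\mathbb R^n$, and $V(I')=\operatorname{trop}(\phi)(V(I))$.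
   Context: $\overline{\mathbb R}=(\mathbb R\cup\{\infty\},\min,+)$, $\odot=+$, $\mathbb B=\{0,\infty\}$. $[f]_{\mathbf x^{\mathbf u}}$ is the coefficient of $\mathbf x^{\mathbf u}$, $f(\mathbf w)=\min_{\mathbf u}([f]_{\mathbf x^{\mathbf u}}+\mathbf u\cdot\mathbf w)$. Tropical ideal: for $f,g\in I$ and $\mathbf x^{\mathbf u}$ with $[f]_{\mathbf x^{\mathbf u}}=[g]_{\mathbf x^{\mathbf u}}\ne\infty$ there is $h\in I$ with $[h]_{\mathbf x^{\mathbf u}}=\infty$ and $[h]_{\mathbf x^{\mathbf v}}\ge\min([f]_{\mathbf x^{\mathbf v}},[g]_{\mathbf x^{\mathbf v}})$ for all $\mathbf v$, with equality when $[f]_{\mathbf x^{\mathbf v}}\ne[g]_{\mathbf x^{\mathbf v}}$. $\operatorname{in}_{\mathbf w}(f)=\bigoplus_{\mathbf u:[f]_{\mathbf x^{\mathbf u}}+\mathbf u\cdot\mathbf w=f(\mathbf w)}\mathbf x^{\mathbf u}\in\mathbb B[x^{\pm1}]$, $\operatorname{in}_{\mathbf w}(I)=\{\operatorname{in}_{\mathbf w}(f):f\in I\}$. $V(I)=\{\mathbf w\in\mathbb R^n:$ for every $f\in I$, $f\ne\infty$, the minimum in $f(\mathbf w)$ is attained at least twice$\}$. *)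

(* Defs.v *)
(* Tropical Laurent polynomials over Rbar = (R ∪ {∞}, min, +),
   with R : realType; ∞ is represented by None : option R. *)
From HB Require Import structures.
From mathcomp Require Import all_boot all_order all_algebra.
From mathcomp Require Import reals.
Set Implicit Arguments. Unset Strict Implicit. Unset Printing Implicit Defensive.
Import Order.TTheory GRing.Theory Num.Theory.
Local Open Scope ring_scope.

Section Trop.
Variables (R : realType) (n : nat).

Definition exps := 'cV[int]_n.
(* a tropical Laurent "series": coefficient [f]_{x^u} ∈ Rbar, None = ∞ *)
Definition tpoly := exps -> option R.
(* Boolean Laurent polynomials in B = {0,∞}: true = coefficient 0 *)
Definition bpoly := exps -> bool.

Definition tadd (a b : option R) : option R :=
  match a, b with
  | None, _ => b
  | _, None => a
  | Some x, Some y => Some (Num.min x y)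
  end.
Definition tmul (a b : option R) : option R :=
  match a, b with
  | Some x, Some y => Some (x + y)
  | _, _ => None
  end.
Definition tle (a b : option R) : bool :=
  match a, b with
  | _, None => true
  | None, Some _ => false
  | Some x, Some y => x <= y
  end.

Definition dotp (u : exps) (w : 'cV[R]_n) : R :=
  \sum_(i < n) (u i 0)%:~R * w i 0.

Definition covers (s : seq exps) (f : tpoly) : Prop :=
  forall u, f u <> None -> u \in s.
(* f is an element of Rbar[x_1^{±1},...,x_n^{±1}] *)
Definition finsupp (f : tpoly) : Prop := exists s, covers s f.

(* product f ⊙ g, computed through a sequence s covering supp f:
   [f ⊙ g]_u = min_v ([f]_v + [g]_{u-v}) *)
Definition tpmul (s : seq exps) (f g : tpoly) : tpoly :=
  fun u => \big[tadd/None]_(v <- s) tmul (f v) (g (u - v)).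

Definition is_ideal (I : tpoly -> Prop) : Prop :=
  [/\ forall f, I f -> finsupp f,
      I (fun _ => None),
      forall f g, I f -> I g -> I (fun u => tadd (f u) (g u))
    & forall s f g, covers s f -> I g -> I (tpmul s f g)].

Definition tropical_ideal (I : tpoly -> Prop) : Prop :=
  is_ideal I /\
  forall f g u, I f -> I g -> f u = g u -> f u <> None ->
    exists h, [/\ I h, h u = None &
      forall v, tle (tadd (f v) (g v)) (h v) /\
                (f v <> g v -> h v = tadd (f v) (g v))].

(* in_w(f) as a subset of Z^n (the support of a B-Laurent polynomial,
   coefficient 0 on it and ∞ elsewhere): the exponents u with [f]_u ≠ ∞ at
   which the minimum min_v([f]_v + v·w) is attained.
   (Convention: in_w(∞) = ∞, i.e. empty support.) *)
Definition inw (w : 'cV[R]_n) (f : tpoly) (u : exps) : Prop :=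
  exists c, f u = Some c /\
    forall v d, f v = Some d -> c + dotp u w <= d + dotp v w.

Definition inwI (w : 'cV[R]_n) (I : tpoly -> Prop) (Q : exps -> Prop) : Prop :=
  exists f, I f /\ forall u, Q u <-> inw w f u.

Definition tvar (I : tpoly -> Prop) (w : 'cV[R]_n) : Prop :=
  forall f, I f -> (exists u, f u <> None) ->
    exists u v, u <> v /\ inw w f u /\ inw w f v.

(* phi^*(f) for phi^*(x_i) = lambda_i ⊙ x^{a_i}:
   phi^*(c ⊙ x^u) = (c + lambda·u) ⊙ x^{A u}, hence
   [phi^* f]_v = [f]_{A^{-1} v} + lambda·(A^{-1} v) *)
Definition phis (A : 'M[int]_n) (lam : 'cV[R]_n) (f : tpoly) : tpoly :=
  fun v => let u := invmx A *m v in tmul (f u) (Some (dotp u lam)).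

(* phi_A^* on B-polynomials (x^u ↦ x^{A u}), on supports *)
Definition phiA (A : 'M[int]_n) (P : exps -> Prop) : exps -> Prop :=
  fun v => P (invmx A *m v).

Definition tropphi (A : 'M[int]_n) (lam w : 'cV[R]_n) : 'cV[R]_n :=
  (map_mx (fun z : int => z%:~R) A)^T *m w + lam.

End Trop.

(* Main.v *)
Require Import Defs.
From mathcomp Require Import all_boot all_order all_algebra.
From mathcomp Require Import reals ring lra.
From Stdlib Require Import FunctionalExtensionality.
Set Implicit Arguments. Unset Strict Implicit. Unset Printing Implicit Defensive.
Import Order.TTheory GRing.Theory Num.Theory.
Local Open Scope ring_scope.

Lemma tmulA (R : realType) (a : option R) c d :
  tmul (tmul a (Some c)) (Some d) = tmul a (Some (c + d)).
Proof. by case: a => //= x; rewrite addrA. Qed.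

Lemma tmul0 (R : realType) (a : option R) : tmul a (Some 0) = a.
Proof. by case: a => //= x; rewrite addr0. Qed.

Lemma tmulK (R : realType) (a : option R) c :
  tmul (tmul a (Some c)) (Some (- c)) = a.
Proof. by rewrite tmulA subrr tmul0. Qed.

Lemma tmul_tadd (R : realType) (a b : option R) c :
  tmul (tadd a b) (Some c) = tadd (tmul a (Some c)) (tmul b (Some c)).
Proof. by case: a; case: b => //= x y; rewrite addr_minl. Qed.

Lemma tmul_None (R : realType) (a : option R) c :
  (tmul a (Some c) = None) <-> a = None.
Proof. by case: a. Qed.

Lemma tmul_inj (R : realType) (a b : option R) c :
  tmul a (Some c) = tmul b (Some c) -> a = b.
Proof. by move=> h; rewrite -(tmulK a c) h tmulK. Qed.

Lemma tle_tmul (R : realType) (a b : option R) c :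
  tle a b -> tle (tmul a (Some c)) (tmul b (Some c)).
Proof. by case: a; case: b => //= x y; rewrite lerD2r. Qed.

Lemma tmul_big (R : realType) (T : Type) (s : seq T) (F : T -> option R) c :
  tmul (\big[@tadd R/None]_(v <- s) F v) (Some c) =
  \big[@tadd R/None]_(v <- s) tmul (F v) (Some c).
Proof.
elim: s => [|x s IH]; first by rewrite !big_nil.
by rewrite !big_cons tmul_tadd IH.
Qed.

Lemma big_tadd_None (R : realType) (T : eqType) (s : seq T) (F : T -> option R) :
  \big[@tadd R/None]_(v <- s) F v <> None -> exists2 v, v \in s & F v <> None.
Proof.
elim: s => [|x s IH]; first by rewrite big_nil.
rewrite big_cons.
case E: (F x) => [a|] /=.
  by move=> _; exists x; rewrite ?mem_head ?E.
move=> /IH [v vs Fv]; exists v => //; by rewrite in_cons vs orbT.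
Qed.

Lemma tadd_None (R : realType) (a b : option R) :
  tadd a b <> None -> a <> None \/ b <> None.
Proof. by case: a => [x|] /= H; [left|right]. Qed.

Lemma dotpE (R : realType) n (u : exps n) (w : 'cV[R]_n) :
  dotp u w = ((map_mx (fun z : int => (z%:~R : R)) u)^T *m w) 0 0.
Proof. by rewrite /dotp !mxE; apply: eq_bigr => i _; rewrite !mxE. Qed.

Lemma dotpB (R : realType) n (u v : exps n) (w : 'cV[R]_n) :
  dotp (u - v) w = dotp u w - dotp v w.
Proof. by rewrite /dotp -sumrB; apply: eq_bigr => i _; rewrite !mxE rmorphB /= mulrBl. Qed.

Lemma dotpDr (R : realType) n (u : exps n) (w w' : 'cV[R]_n) :
  dotp u (w + w') = dotp u w + dotp u w'.
Proof. by rewrite /dotp -big_split; apply: eq_bigr => i _; rewrite !mxE mulrDr. Qed.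

Lemma dotpM (R : realType) n (A : 'M[int]_n) (u : exps n) (w : 'cV[R]_n) :
  dotp (A *m u) w = dotp u ((map_mx (fun z : int => (z%:~R : R)) A)^T *m w).
Proof. by rewrite !dotpE map_mxM trmx_mul mulmxA. Qed.

Definition phinv (R : realType) n (A : 'M[int]_n) (lam : 'cV[R]_n) (F : tpoly R n) : tpoly R n :=
  fun v => tmul (F (A *m v)) (Some (- dotp v lam)).

Lemma phisA (R : realType) n (A : 'M[int]_n) (lam : 'cV[R]_n) f u :
  A \in unitmx -> phis A lam f (A *m u) = tmul (f u) (Some (dotp u lam)).
Proof. by move=> hA; rewrite /phis mulKmx. Qed.

Lemma phis_phinv (R : realType) n (A : 'M[int]_n) (lam : 'cV[R]_n) F :
  A \in unitmx -> phis A lam (phinv A lam F) = F.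
Proof.
move=> hA; apply: functional_extensionality => v.
by rewrite /phis /phinv mulKVmx // tmulA addNr tmul0.
Qed.

Lemma phinv_phis (R : realType) n (A : 'M[int]_n) (lam : 'cV[R]_n) f :
  A \in unitmx -> phinv A lam (phis A lam f) = f.
Proof.
move=> hA; apply: functional_extensionality => v.
by rewrite /phinv phisA // tmulK.
Qed.

Lemma finsupp_phinv (R : realType) n (A : 'M[int]_n) (lam : 'cV[R]_n) F :
  A \in unitmx -> finsupp F -> finsupp (phinv A lam F).
Proof.
move=> hA [s hs]; exists (map (mulmx (invmx A)) s) => v.
rewrite /phinv => /tmul_None/hs Hv.
by rewrite -(mulKmx hA v); apply: map_f.
Qed.

Lemma covers_phis (R : realType) n (A : 'M[int]_n) (lam : 'cV[R]_n) s f :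
  A \in unitmx -> covers s f -> covers (map (mulmx A) s) (phis A lam f).
Proof.
move=> hA hs v.
rewrite /phis => /tmul_None/hs Hv.
by rewrite -(mulKVmx hA v); apply: map_f.
Qed.

Lemma inw_phis (R : realType) n (A : 'M[int]_n) (lam w : 'cV[R]_n) f u :
  A \in unitmx ->
  inw (tropphi A lam w) f u <-> inw w (phis A lam f) (A *m u).
Proof.
move=> hA; rewrite /tropphi; split.
- move=> [c [fu H]]; exists (c + dotp u lam); split.
    by rewrite phisA // fu.
  move=> x d; rewrite -(mulKVmx hA x); move: (invmx A *m x) => y.
  rewrite phisA //.
  case e: (f y) => [d'|] //= [<-].
  have := H _ _ e; rewrite !dotpM !dotpDr; lra.
- move=> [c [fu H]].
  move: fu; rewrite phisA //; case e: (f u) => [c'|] //= [ec].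
  exists c'; split => // v d fv.
  have := H (A *m v) (d + dotp v lam); rewrite phisA // fv => /(_ erefl).
  rewrite -ec !dotpM !dotpDr; lra.
Qed.

Lemma phis_tadd (R : realType) n (A : 'M[int]_n) (lam : 'cV[R]_n) f g :
  phis A lam (fun u => tadd (f u) (g u)) =
  (fun v => tadd (phis A lam f v) (phis A lam g v)).
Proof. by apply: functional_extensionality => v; rewrite /phis tmul_tadd. Qed.

Lemma phis_tpmul (R : realType) n (A : 'M[int]_n) (lam : 'cV[R]_n) s f g :
  A \in unitmx ->
  phis A lam (tpmul s f g) = tpmul (map (mulmx A) s) (phis A lam f) (phis A lam g).
Proof.
move=> hA; apply: functional_extensionality => v.
rewrite /phis /tpmul tmul_big big_map; apply: eq_bigr => u _.
rewrite mulKmx // mulmxBr mulKmx // dotpB.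
case: (f u) => [a|] //=; case: (g _) => [b|] //=.
congr Some; ring.
Qed.

Lemma finsupp_tpmul (R : realType) n s t (f g : tpoly R n) :
  covers t g -> finsupp (tpmul s f g).
Proof.
move=> ht; exists [seq x + y | x <- s, y <- t] => u /big_tadd_None [v vs].
case: (f v) => [a|] //=; case E: (g (u - v)) => [b|] //= _.
have := ht (u - v); rewrite E => /(_ ltac:(discriminate)) H.
have -> : u = v + (u - v) by rewrite addrC subrK.
exact: allpairs_f.
Qed.

Unset Implicit Arguments.
Theorem lemma4p5 (R : realType) (n : nat) (A : 'M[int]_n) (lam : 'cV[R]_n)
    (I : tpoly R n -> Prop) :
  A \in unitmx ->
  tropical_ideal I ->
  let I' := fun f : tpoly R n => finsupp f /\ I (phis A lam f) in
  [/\ tropical_ideal I',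
      forall (w : 'cV[R]_n) (Q : exps n -> Prop),
        (exists P, inwI (tropphi A lam w) I' P /\
                   forall v, Q v <-> phiA A P v) <-> inwI w I Q
    & forall w' : 'cV[R]_n,
        tvar I' w' <-> exists w, tvar I w /\ w' = tropphi A lam w].
Proof.
move=> hA [[hfs h0 hadd hmul] helim] I'.
set ART := (map_mx (fun z : int => (z%:~R : R)) A)^T.
have hAR : ART \in unitmx.
  rewrite unitmx_tr unitmxE det_map_mx; apply: rmorph_unit; by rewrite -unitmxE.
have hII' : forall F, I F -> I' (phinv A lam F).
  move=> F IF; split; first exact: finsupp_phinv (hfs F IF).
  by rewrite phis_phinv.
split.
- split; first split.
  + by move=> f [].
  + by split; [exists [::] | exact: h0].
  + move=> f g [[s hs] If] [[t ht] Ig]; split.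
      exists (s ++ t) => u /tadd_None [/hs|/ht] H; by rewrite mem_cat H ?orbT.
    rewrite phis_tadd; exact: hadd.
  + move=> s f g hs [[t ht] Ig]; split; first exact: finsupp_tpmul ht.
    rewrite phis_tpmul //; apply: hmul => //; exact: covers_phis.
  + move=> f g u [_ If] [_ Ig] efg fu.
    have e1: phis A lam f (A *m u) = phis A lam g (A *m u) by rewrite !phisA // efg.
    have e2: phis A lam f (A *m u) <> None by rewrite phisA // => /tmul_None.
    have [h [Ih hu Hh]] := helim _ _ _ If Ig e1 e2.
    exists (phinv A lam h); split.
    * exact: hII'.
    * by rewrite /phinv hu.
    * move=> v; have [H1 H2] := Hh (A *m v); rewrite !phisA // in H1 H2.
      split.
        rewrite -tmul_tadd in H1. have := tle_tmul (- dotp v lam) H1. by rewrite tmulK.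
      move=> ne; rewrite /phinv H2; last by move/tmul_inj.
      by rewrite -tmul_tadd tmulK.
- move=> w Q; split.
  + move=> [P [[f [[_ If] HP]] HQ]]; exists (phis A lam f); split => // v.
    by rewrite HQ /phiA HP inw_phis // mulKVmx.
  + move=> [F [IF HF]]; exists (inw (tropphi A lam w) (phinv A lam F)); split.
      by exists (phinv A lam F); split => //; exact: hII'.
    by move=> v; rewrite HF /phiA inw_phis // phis_phinv // mulKVmx.
- move=> w'.
  have key : forall w, tvar I' (tropphi A lam w) <-> tvar I w.
    move=> w; split.
    * move=> H F IF [x0 Fx0].
      have := H (phinv A lam F) (hII' F IF); case.
        by exists (invmx A *m x0); rewrite /phinv mulKVmx // => /tmul_None.
      move=> u [v [uv [iu iv]]]; exists (A *m u), (A *m v); split.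
        by move/(congr1 (mulmx (invmx A))); rewrite !mulKmx.
      have eF : F = phis A lam (phinv A lam F) by rewrite phis_phinv.
      by rewrite eF -!inw_phis.
    * move=> H f [fs If] [u0 fu0].
      have := H _ If; case.
        by exists (A *m u0); rewrite phisA // => /tmul_None.
      move=> x [y [xy [ix iy]]]; exists (invmx A *m x), (invmx A *m y); split.
        by move/(congr1 (mulmx A)); rewrite !mulKVmx.
      by rewrite !inw_phis // !mulKVmx.
  split.
    move=> H; exists (invmx ART *m (w' - lam)).
    have ew : w' = tropphi A lam (invmx ART *m (w' - lam)).
      by rewrite /tropphi -/ART mulKVmx // subrK.
    by split => //; apply/key; rewrite -ew.
  by move=> [w [Hw ->]]; apply/key.
Qed.
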